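(* Let $\xi=(\xi_+,\xi_-)\in\mathcal{P}^2$ be minimal. Then the following three statements are equivalent: (1) there is a CSCA $\mathbf{a}$ with $\mathbf{a}\xi=u\xi$; (2) there is a CSCA $\mathbf{b}$ with $\mathbf{b}\xi=\binom{1}{u}$; (3) $\xi\wedge\bar\xi=u^{-1}+u$.
   Context: $\mathcal{P}$ denotes the ring of Laurent polynomials in $u$ over $\mathbb{Z}_2$; $\bar p(u)=p(u^{-1})$, applied entrywise to vectors. $\mathcal{R}$ is the subring of palindromes ($\bar p=p$). A CSCA is a $2\times2$ matrix with entries in $\mathcal{R}$ and determinant $1$. $\xi$ is minimal if $\xi_+,\xi_-$ have no common non-invertible divisor in $\mathcal{P}$. The wedge product is $\xi\wedge\eta=\xi_+\eta_-+\eta_+\xi_-$. *)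

(* Defs.v *)
From HB Require Import structures.
From mathcomp Require Import all_boot all_order all_algebra.

Set Implicit Arguments.
Unset Strict Implicit.
Unset Printing Implicit Defensive.

Import Order.TTheory GRing.Theory Num.Theory.
Local Open Scope ring_scope.

(* A Laurent polynomial u^k * p(u) (k : int, p : {poly 'F_2}) is stored in
   normal form: either p = 0 and k = 0, or p has nonzero constant term.
   Every Laurent polynomial has exactly one such representation. *)
Definition lnormal (kp : int * {poly 'F_2}) : bool :=
  if kp.2 == 0 then kp.1 == 0 else kp.2`_0 != 0.

Definition laurent := {kp : int * {poly 'F_2} | lnormal kp}.

Definition lexp (x : laurent) : int := (val x).1.
Definition lpoly (x : laurent) : {poly 'F_2} := (val x).2.

(* number of leading zero coefficients (the largest m with X^m | p, p != 0) *)
Definition lval (p : {poly 'F_2}) : nat := find (fun c : 'F_2 => c != 0) p.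

Lemma lnormalize_proof (k : int) (p : {poly 'F_2}) :
  lnormal (if p == 0 then (0%R, 0%R) else (k + (lval p)%:Z, drop_poly (lval p) p)).
Proof.
case: eqP => [_|/eqP p0]; first by rewrite /lnormal /= !eqxx.
rewrite /lnormal /=.
have hp : has (fun c : 'F_2 => c != 0) p.
  apply/hasP; exists (lead_coef p).
    rewrite lead_coefE; apply: mem_nth; by rewrite ltn_predL size_poly_gt0.
  by rewrite /= lead_coef_eq0.
have h0 : (drop_poly (lval p) p)`_0 != 0.
  by rewrite coef_drop_poly add0n; exact: (nth_find 0 hp).
by rewrite ifN //; apply: contra h0 => /eqP ->; rewrite coef0.
Qed.

Definition lnormalize (k : int) (p : {poly 'F_2}) : laurent :=
  exist (fun kp => lnormal kp) _ (lnormalize_proof k p).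

Definition lzero : laurent := lnormalize 0 0.
Definition lone : laurent := lnormalize 0 1.
Definition lmono (k : int) : laurent := lnormalize k 1.
Definition lu : laurent := lmono 1.
Definition luinv : laurent := lmono (-1).

Definition ladd (x y : laurent) : laurent :=
  let m := Order.min (lexp x) (lexp y) in
  lnormalize m ('X^(absz (lexp x - m)) * lpoly x + 'X^(absz (lexp y - m)) * lpoly y).

Definition lopp (x : laurent) : laurent := lnormalize (lexp x) (- lpoly x).

Definition lsub (x y : laurent) : laurent := ladd x (lopp y).

Definition lmul (x y : laurent) : laurent :=
  lnormalize (lexp x + lexp y) (lpoly x * lpoly y).

Definition rev_poly (p : {poly 'F_2}) : {poly 'F_2} :=
  \poly_(i < size p) p`_((size p).-1 - i).

(* conjugation  bar p (u) = p (u^-1):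
   u^-k p(u^-1) = u^-(k + deg p) * (reversed p)(u) *)
Definition lbar (x : laurent) : laurent :=
  lnormalize (- (lexp x + ((size (lpoly x)).-1)%:Z)) (rev_poly (lpoly x)).

Definition palindrome (x : laurent) : Prop := lbar x = x.

Definition ldvd (d x : laurent) : Prop := exists q, x = lmul d q.
Definition lunit (x : laurent) : Prop := exists y, lmul x y = lone.

Definition lvec := (laurent * laurent)%type.

Definition vbar (xi : lvec) : lvec := (lbar xi.1, lbar xi.2).
Definition vscale (c : laurent) (xi : lvec) : lvec := (lmul c xi.1, lmul c xi.2).

Definition minimal (xi : lvec) : Prop :=
  forall d, ldvd d xi.1 -> ldvd d xi.2 -> lunit d.

Definition wedge (xi eta : lvec) : laurent :=
  ladd (lmul xi.1 eta.2) (lmul eta.1 xi.2).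

Definition lmx := 'M[laurent]_2.
Definition i0 : 'I_2 := ord0.
Definition i1 : 'I_2 := ord_max.

Definition mxact (A : lmx) (xi : lvec) : lvec :=
  (ladd (lmul (A i0 i0) xi.1) (lmul (A i0 i1) xi.2),
   ladd (lmul (A i1 i0) xi.1) (lmul (A i1 i1) xi.2)).

Definition ldet (A : lmx) : laurent :=
  lsub (lmul (A i0 i0) (A i1 i1)) (lmul (A i0 i1) (A i1 i0)).

Definition csca (A : lmx) : Prop :=
  (forall i j, palindrome (A i j)) /\ ldet A = lone.

(* Main.v *)
Require Import Defs.
From mathcomp Require Import all_boot all_order all_algebra fraction ring zify.
Set Implicit Arguments. Unset Strict Implicit. Unset Printing Implicit Defensive.
Import Order.TTheory GRing.Theory Num.Theory.
Local Open Scope ring_scope.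

Notation K := {fraction {poly 'F_2}}.
Notation tf := (@FracField.tofrac {poly 'F_2}).
Notation "x %:F" := (tf x).
Definition XF : K := ('X : {poly 'F_2})%:F.
Lemma XF_neq0 : XF != 0.
Proof. by rewrite /XF tofrac_eq0 polyX_eq0. Qed.
Definition E (k : int) (p : {poly 'F_2}) : K := p%:F * XF ^ k.
Definition phi (x : laurent) : K := E (lexp x) (lpoly x).

Lemma XFn (n : nat) : XF ^ (n%:Z) = ('X^n : {poly 'F_2})%:F.
Proof. by rewrite -exprnP /XF tofracXn. Qed.

Lemma take_lval (p : {poly 'F_2}) : take_poly (lval p) p = 0.
Proof.
apply/polyP => i; rewrite coef_take_poly coef0.
case: ifP => // hi.
have := before_find 0 hi. by move/negbFE/eqP.
Qed.

Lemma phi_norm k p : phi (lnormalize k p) = E k p.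
Proof.
rewrite /phi /lexp /lpoly /=. case: eqP => [->|_] /=.
  by rewrite /E tofrac0 !mul0r.
rewrite /E expfzDr ?XF_neq0 // XFn mulrCA mulrC -tofracM.
by rewrite -[in RHS](poly_take_drop (lval p) p) take_lval add0r.
Qed.

Lemma E_eq_aux k m p q : (k <= m)%R -> lnormal (k,p) -> lnormal (m,q) ->
  E k p = E m q -> k = m /\ p = q.
Proof.
move=> hkm; rewrite /lnormal /= => np nq.
have [n hn] : exists n : nat, m = k + n%:Z.
  exists (absz (m - k)). rewrite gez0_abs ?subr_ge0 //. ring.
rewrite /E hn expfzDr ?XF_neq0 // XFn.
have -> : q%:F * (XF ^ k * ('X^n)%:F) = (q * 'X^n)%:F * XF ^ k by rewrite tofracM; ring.
move=> /(mulIf (expfz_neq0 k XF_neq0)) /eqP.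
rewrite tofrac_eq => /eqP hpq.
move: np nq; case: eqP => [p0|/eqP pn0].
  move=> /eqP k0; move: hpq; rewrite p0 => /esym/eqP; rewrite mulf_eq0 => /orP [/eqP q0|].
    rewrite q0 eqxx => /eqP m0; by rewrite -hn k0 m0.
  by rewrite (negbTE (monic_neq0 (monicXn _ n))).
move=> c0 _; case: n hn hpq => [|n] hn hpq.
  by rewrite addr0 hpq expr0 mulr1.
by move: c0; rewrite hpq coefMXn ltn0Sn eqxx.
Qed.

Lemma phi_inj : injective phi.
Proof.
move=> [[k p] np] [[m q] nq]; rewrite /phi /lexp /lpoly /= => h.
have [hkm|hmk] := lerP k m.
  have [e1 e2] := E_eq_aux hkm np nq h. by apply: val_inj; rewrite /= e1 e2.
have [e1 e2] := E_eq_aux (ltW hmk) nq np (esym h). by apply: val_inj; rewrite /= e1 e2.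
Qed.

Definition cf : {rmorphism 'F_2 -> K} := (tf \o polyC)%FUN.
Definition tilde (p : {poly 'F_2}) : K := (map_poly cf p).[XF^-1].
Definition Ebar (k : int) (p : {poly 'F_2}) : K := tilde p * XF ^ (- k).

Lemma tildeM p q : tilde (p * q) = tilde p * tilde q.
Proof. by rewrite /tilde rmorphM hornerM. Qed.
Lemma tildeD p q : tilde (p + q) = tilde p + tilde q.
Proof. by rewrite /tilde rmorphD hornerD. Qed.
Lemma tildeXn n : tilde 'X^n = XF ^ (- n%:Z).
Proof. by rewrite /tilde map_polyXn hornerXn exprnP exprz_inv. Qed.
Lemma tilde1 : tilde 1 = 1.
Proof. by rewrite /tilde rmorph1 hornerC. Qed.
Lemma size_mapcf p : size (map_poly cf p) = size p.
Proof. apply: size_map_inj_poly; [exact: fmorph_inj | exact: rmorph0]. Qed.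

Lemma tilde_sum (p : {poly 'F_2}) n : (size p <= n)%N ->
  tilde p = \sum_(i < n) cf p`_i * XF ^ (- i%:Z).
Proof.
move=> hs; rewrite /tilde (horner_coef_wide _ (n:=n)) ?size_mapcf //.
by apply: eq_bigr => i _; rewrite coef_map exprnP exprz_inv.
Qed.

Lemma tf_sum (p : {poly 'F_2}) n : (size p <= n)%N ->
  p%:F = \sum_(i < n) cf p`_i * XF ^ (i%:Z).
Proof.
move=> hs; rewrite -{1}(coefK p) poly_def rmorph_sum /=.
rewrite (big_ord_widen n (fun i => tf (p`_i *: 'X^i))) // big_mkcond /=.
apply: eq_bigr => i _; case: ltnP => hi.
  by rewrite -mul_polyC tofracM XFn.
by rewrite nth_default // mul0r.
Qed.

Lemma E_eq_shift k n p q : E k p = E (k + n%:Z) q -> p = q * 'X^n.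
Proof.
rewrite /E expfzDr ?XF_neq0 // XFn.
have -> : q%:F * (XF ^ k * ('X^n)%:F) = (q * 'X^n)%:F * XF ^ k by rewrite tofracM; ring.
by move=> /(mulIf (expfz_neq0 k XF_neq0)) /eqP; rewrite tofrac_eq => /eqP.
Qed.

Lemma E_Ebar_aux k m p q : (k <= m)%R -> E k p = E m q -> Ebar k p = Ebar m q.
Proof.
move=> hkm.
have [n hn] : exists n : nat, m = k + n%:Z.
  exists (absz (m - k)). rewrite gez0_abs ?subr_ge0 //. ring.
rewrite hn => /E_eq_shift ->.
rewrite /Ebar tildeM tildeXn -mulrA -expfzDr ?XF_neq0 //; congr (_ * XF ^ _); ring.
Qed.

Lemma E_Ebar k m p q : E k p = E m q -> Ebar k p = Ebar m q.
Proof.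
have [hkm|hmk] := lerP k m; first exact: E_Ebar_aux.
by move=> h; symmetry; apply: E_Ebar_aux (ltW hmk) (esym h).
Qed.

Lemma rev_tf (p : {poly 'F_2}) :
  (rev_poly p)%:F = tilde p * XF ^ (((size p).-1)%:Z).
Proof.
set n := size p.
rewrite (tf_sum (n := n)) /rev_poly ?size_poly // (tilde_sum (n := n)) // mulr_suml.
rewrite [RHS](reindex_inj rev_ord_inj) /=; apply: eq_bigr => i _.
rewrite coef_poly ltn_ord -mulrA -expfzDr ?XF_neq0 //.
have h1 : (n.-1 - i = n - i.+1)%N by have := ltn_ord i; lia.
have h2 : (i%:Z = - (n - i.+1)%N%:Z + (n.-1)%N%:Z)%R.
  have := ltn_ord i; rewrite -/n => hi.
  rewrite -subzn; last by lia.
  rewrite predn_int; last by lia.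
  ring.
by rewrite h1 -h2.
Qed.

Lemma two0 : (2 : K) = 0.
Proof.
have h : (1 + 1 : {poly 'F_2}) = 0 by rewrite -polyC1 -polyCD; apply/eqP; rewrite polyC_eq0.
by rewrite -[2]/(1+1) -tofrac1 -tofracD h tofrac0.
Qed.

Lemma oppK2 (x : K) : - x = x.
Proof. apply/eqP; rewrite -subr_eq0 -opprD -mulr2n -mulr_natl two0 mul0r oppr0. by apply/eqP. Qed.

Lemma E_shift k m p : (m <= k)%R -> ('X^(absz (k - m)) * p)%:F * XF ^ m = E k p.
Proof.
move=> hmk; rewrite tofracM -XFn gez0_abs ?subr_ge0 // /E.
by rewrite mulrAC -expfzDr ?XF_neq0 // subrK mulrC.
Qed.

Lemma phi_add x y : phi (ladd x y) = phi x + phi y.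
Proof.
rewrite /ladd phi_norm /E tofracD mulrDl !E_shift //.
  by rewrite ge_min lexx orbT.
by rewrite ge_min lexx.
Qed.

Lemma phi_mul x y : phi (lmul x y) = phi x * phi y.
Proof. rewrite /lmul phi_norm /phi /E tofracM expfzDr ?XF_neq0 //; ring. Qed.

Lemma phi_opp x : phi (lopp x) = phi x.
Proof. by rewrite /lopp phi_norm /phi /E tofracN mulNr oppK2. Qed.

Lemma phi_lone : phi lone = 1.
Proof. by rewrite /lone phi_norm /E tofrac1 mul1r expr0z. Qed.
Lemma phi_lzero : phi lzero = 0.
Proof. by rewrite /lzero phi_norm /E tofrac0 mul0r. Qed.
Lemma phi_lmono k : phi (lmono k) = XF ^ k.
Proof. by rewrite /lmono phi_norm /E tofrac1 mul1r. Qed.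
Lemma phi_lu : phi lu = XF.
Proof. by rewrite /lu phi_lmono expr1z. Qed.
Lemma phi_luinv : phi luinv = XF^-1.
Proof. by rewrite /luinv phi_lmono exprN1. Qed.
Lemma phi_lsub x y : phi (lsub x y) = phi x + phi y.
Proof. by rewrite /lsub phi_add phi_opp. Qed.
Lemma UV : XF * XF^-1 = 1.
Proof. by rewrite mulfV ?XF_neq0. Qed.

Lemma rev_tilde (p : {poly 'F_2}) :
  tilde (rev_poly p) = p%:F * XF ^ (- ((size p).-1)%:Z).
Proof.
set n := size p.
rewrite (tilde_sum (n := n)) /rev_poly ?size_poly // (tf_sum (n := n)) // mulr_suml.
rewrite [RHS](reindex_inj rev_ord_inj) /=; apply: eq_bigr => i _.
rewrite coef_poly ltn_ord -mulrA -expfzDr ?XF_neq0 //.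
have h1 : (n.-1 - i = n - i.+1)%N by have := ltn_ord i; lia.
have h2 : (- i%:Z = (n - i.+1)%N%:Z - (n.-1)%N%:Z)%R.
  have := ltn_ord i; rewrite -/n => hi.
  rewrite -subzn; last by lia.
  rewrite predn_int; last by lia.
  ring.
by rewrite h1 -h2.
Qed.

Lemma phi_lbar x : phi (lbar x) = Ebar (lexp x) (lpoly x).
Proof.
rewrite /lbar phi_norm /E rev_tf /Ebar -mulrA -expfzDr ?XF_neq0 //.
congr (_ * XF ^ _); ring.
Qed.

Lemma phi_lbarE x k p : phi x = E k p -> phi (lbar x) = Ebar k p.
Proof. by move=> h; rewrite phi_lbar; apply: E_Ebar. Qed.

Lemma lbar_add x y : lbar (ladd x y) = ladd (lbar x) (lbar y).
Proof.
apply: phi_inj.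
set m := Order.min (lexp x) (lexp y).
rewrite (@phi_lbarE _ m ('X^(absz (lexp x - m)) * lpoly x + 'X^(absz (lexp y - m)) * lpoly y)); last first.
  by rewrite /ladd phi_norm.
rewrite phi_add !phi_lbar /Ebar tildeD !tildeM !tildeXn mulrDl.
rewrite !gez0_abs ?subr_ge0 ?ge_min ?lexx ?orbT //.
have e : forall k, XF ^ (- (k - m)) * XF ^ (- m) = XF ^ (- k).
  by move=> k; rewrite -expfzDr ?XF_neq0 //; congr (XF ^ _); ring.
rewrite [X in X + _]mulrAC [X in _ + X]mulrAC !e; ring.
Qed.

Lemma lbar_mul x y : lbar (lmul x y) = lmul (lbar x) (lbar y).
Proof.
apply: phi_inj.
rewrite (@phi_lbarE _ (lexp x + lexp y) (lpoly x * lpoly y)); last by rewrite /lmul phi_norm.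
rewrite phi_mul !phi_lbar /Ebar tildeM opprD expfzDr ?XF_neq0 //; ring.
Qed.

Lemma lbar_invol x : lbar (lbar x) = x.
Proof.
apply: phi_inj.
rewrite (@phi_lbarE _ (- (lexp x + ((size (lpoly x)).-1)%:Z)) (rev_poly (lpoly x))); last first.
  by rewrite /lbar phi_norm.
rewrite /Ebar rev_tilde /phi /E -mulrA -expfzDr ?XF_neq0 //.
congr (_ * XF ^ _); ring.
Qed.

Lemma lbar_mono k : lbar (lmono k) = lmono (- k).
Proof.
apply: phi_inj; rewrite (@phi_lbarE _ k 1); last by rewrite /lmono phi_norm.
by rewrite /Ebar tilde1 mul1r phi_lmono.
Qed.

Lemma lbar_lone : lbar lone = lone.
Proof. by rewrite -[lone]/(lmono 0) lbar_mono oppr0. Qed.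
Lemma lbar_lu : lbar lu = luinv.
Proof. by rewrite /lu lbar_mono. Qed.
Lemma lbar_luinv : lbar luinv = lu.
Proof. by rewrite /luinv lbar_mono opprK. Qed.


Lemma phi_neq0 x : x <> lzero -> phi x != 0.
Proof. by move=> h; apply/eqP => e; apply: h; apply: phi_inj; rewrite e phi_lzero. Qed.

Lemma lcancel t x y : t <> lzero -> lmul t x = lmul t y -> x = y.
Proof.
move=> /phi_neq0 h /(f_equal phi); rewrite !phi_mul => /(mulfI h); exact: phi_inj.
Qed.

Lemma lone_neq0 : lone <> lzero.
Proof. by move/(f_equal phi); rewrite phi_lone phi_lzero => /eqP; rewrite oner_eq0. Qed.

Lemma t_neq0 : ladd lu luinv <> lzero.
Proof.
move/(f_equal phi); rewrite phi_add phi_lu phi_luinv phi_lzero => h.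
have : ('X^2 + 1 : {poly 'F_2})%:F = 0.
  rewrite tofracD tofracXn tofrac1 -/XF.
  have -> : XF ^+ 2 + 1 = XF * (XF + XF^-1) by rewrite mulrDr UV expr2.
  by rewrite h mulr0.
move/eqP; rewrite tofrac_eq0 -polyC1 (negbTE (monic_neq0 (monicXnaddC _ _))) //.
Qed.

Lemma lnormal_x x : lpoly x != 0 -> (lpoly x)`_0 != 0.
Proof. by case: x => [[k p] /=]; rewrite /lnormal /lpoly /= => np; case: eqP np. Qed.

Lemma lpoly_eq0 x : lpoly x = 0 -> x = lzero.
Proof.
move=> h; apply: phi_inj; by rewrite phi_lzero /phi /E h tofrac0 mul0r.
Qed.

Lemma unit_size (g q : {poly 'F_2}) k : g`_0 != 0 -> q`_0 != 0 ->
  g%:F * (q%:F * XF ^ k) = 1 -> size g = 1%N.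
Proof.
move=> g0 q0; have gn : g != 0 by apply: contraNneq g0 => ->; rewrite coef0.
have qn : q != 0 by apply: contraNneq q0 => ->; rewrite coef0.
case: k => n h.
  have : g * q * 'X^n = 1.
    apply/eqP; rewrite -tofrac_eq; apply/eqP; rewrite !tofracM tofracXn -/XF exprnP tofrac1 -h; ring.
  move/(congr1 (fun p : {poly 'F_2} => size p)); rewrite size_poly1 size_mulXn ?mulf_neq0 // size_mul //.
  have hq : (0 < size q)%N by rewrite size_poly_gt0.
  have hg : (0 < size g)%N by rewrite size_poly_gt0.
  rewrite -subn1 => e.
  have e' : (n + (size g + size q - 1) = 1)%N by exact: e.
  have hg' : (0 < size g)%N by exact: hg.
  have hq' : (0 < size q)%N by exact: hq.
  clear -e' hg' hq'; lia.
have : g * q = 'X^(n.+1).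
  apply/eqP; rewrite -tofrac_eq; apply/eqP; rewrite tofracXn tofracM -/XF.
  have e : XF ^ (Negz n) * XF ^+ n.+1 = 1.
    by rewrite NegzE exprnP -expfzDr ?XF_neq0 // addNr expr0z.
  rewrite -[LHS]mulr1 -e -[RHS]mul1r -h; ring.
move/(congr1 (fun p : {poly 'F_2} => p`_0)); rewrite coef0M coefXn /= => e.
by move: (mulf_neq0 g0 q0); rewrite e eqxx.
Qed.

Lemma XFNK k : XF ^ (- k) * XF ^ k = 1.
Proof. by rewrite -expfzDr ?XF_neq0 // addNr expr0z. Qed.

Lemma phi_lpoly0 x : lpoly x = 0 -> phi x = 0.
Proof. by move=> h; rewrite /phi /E h tofrac0 mul0r. Qed.

Lemma bezout xi : minimal xi -> exists A B, ladd (lmul A xi.1) (lmul B xi.2) = lone.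
Proof.
case: xi => x y /= hmin.
set g := gcdp (lpoly x) (lpoly y).
have dv : forall z, (g %| lpoly z) -> ldvd (lnormalize 0 g) z.
  move=> z hz; exists (lnormalize (lexp z) (lpoly z %/ g)); apply: phi_inj.
  rewrite phi_mul !phi_norm /phi /E expr0z mulr1 mulrA -tofracM [g * _]mulrC (divpK hz) //.
have [Y hY] := hmin _ (dv x (dvdp_gcdl _ _)) (dv y (dvdp_gcdr _ _)).
have hphi := congr1 phi hY; rewrite phi_mul phi_norm phi_lone /E expr0z mulr1 in hphi.
have Yn : lpoly Y != 0.
  apply/eqP => h; move: hphi; rewrite phi_lpoly0 // mulr0 => /eqP; by rewrite eq_sym oner_eq0.
have g0 : g`_0 != 0.
  apply/negP => /eqP g0.
  have z0 : forall z, (g %| lpoly z) -> lpoly z = 0.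
    move=> z hz; apply/eqP; apply: contraLR isT => /lnormal_x.
    by rewrite -(divpK hz) coef0M g0 mulr0 eqxx.
  have hx := z0 x (dvdp_gcdl _ _); have hy := z0 y (dvdp_gcdr _ _).
  move: hphi; rewrite /g hx hy gcd0p tofrac0 mul0r => /eqP; by rewrite eq_sym oner_eq0.
have sg := unit_size g0 (lnormal_x Yn) hphi.
have : coprimep (lpoly x) (lpoly y) by rewrite /coprimep -/g sg.
move/Bezout_eq1_coprimepP => [[u1 u2] /= hu].
exists (lnormalize (- lexp x) u1), (lnormalize (- lexp y) u2).
apply: phi_inj; rewrite phi_lone phi_add !phi_mul !phi_norm.
have : (u1 * lpoly x + u2 * lpoly y)%:F = 1 by rewrite hu tofrac1.
rewrite tofracD !tofracM => <-; rewrite /phi /E.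
have ex := XFNK (lexp x); have ey := XFNK (lexp y).
ring: ex ey.
Qed.

Definition phiE' := (phi_lone, phi_lzero, phi_lu, phi_luinv, phi_add, phi_mul, phi_opp, phi_lsub).
Ltac lring := apply: phi_inj; rewrite ?phiE'; ring: two0 UV.

Definition tU := ladd lu luinv.
Definition Dv f := exists q, ladd f (lbar f) = lmul tU q.

Lemma lbar_lzero : lbar lzero = lzero.
Proof.
apply: phi_inj; rewrite (@phi_lbarE _ 0 0); last by rewrite phi_lzero /E tofrac0 mul0r.
by rewrite /Ebar /tilde rmorph0 horner0 mul0r phi_lzero.
Qed.

Lemma Dv_add f g : Dv f -> Dv g -> Dv (ladd f g).
Proof.
move=> [qf hf] [qg hg]; exists (ladd qf qg); rewrite lbar_add.
have hf' := congr1 phi hf; have hg' := congr1 phi hg; rewrite !phiE' in hf' hg'.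
apply: phi_inj; rewrite !phiE'.
transitivity ((phi f + phi (lbar f)) + (phi g + phi (lbar g))); first ring.
rewrite hf' hg'; ring.
Qed.

Lemma Dv_mulpal c f : palindrome c -> Dv f -> Dv (lmul c f).
Proof.
move=> pc [qf hf]; exists (lmul c qf); rewrite lbar_mul pc.
have hf' := congr1 phi hf; rewrite !phiE' in hf'.
apply: phi_inj; rewrite !phiE'.
transitivity (phi c * (phi f + phi (lbar f))); first ring.
rewrite hf'; ring.
Qed.

Lemma Dv_bar f : Dv f -> Dv (lbar f).
Proof.
move=> [q h]; exists q; rewrite lbar_invol -h; lring.
Qed.

Lemma phi_mono_nat (n : nat) : phi (lmono n%:Z) = XF ^+ n.
Proof. by rewrite phi_lmono. Qed.
Lemma phi_mono_neg (n : nat) : phi (lmono (- n%:Z)) = XF^-1 ^+ n.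
Proof. by rewrite phi_lmono exprnP exprz_inv. Qed.

Lemma Dv_mono_nat n : Dv (lmono n%:Z) /\ Dv (lmono (n.+1)%:Z).
Proof.
elim: n => [|n [IH1 IH2]].
  split.
    exists lzero; rewrite -[lmono 0]/lone lbar_lone; lring.
  exists lone; rewrite -[lmono 1]/lu lbar_lu /tU; lring.
split=> //; case: IH1 => q hq; exists (ladd (ladd (lmono n.+1) (lmono (- n.+1%:Z))) q).
have hq' := congr1 phi hq; rewrite !phiE' in hq'.
rewrite !lbar_mono in hq' *; apply: phi_inj; rewrite /tU !phiE'.
rewrite !phi_mono_nat !phi_mono_neg in hq' *.
transitivity ((phi lu + phi luinv) * (XF ^+ n.+1 + XF^-1 ^+ n.+1) + (XF ^+ n + XF^-1 ^+ n)).
  rewrite phi_lu phi_luinv !exprS; ring: two0 UV.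
rewrite hq' /tU !phiE'; ring.
Qed.

Lemma Dv_mono k : Dv (lmono k).
Proof.
case: k => n; first by case: (Dv_mono_nat n).
rewrite NegzE; have := Dv_bar (proj2 (Dv_mono_nat n)); by rewrite lbar_mono.
Qed.

Lemma pal_const c : palindrome (lnormalize 0 c%:P).
Proof.
rewrite /palindrome; apply: phi_inj; rewrite (@phi_lbarE _ 0 c%:P) ?phi_norm //.
by rewrite /Ebar /E /tilde map_polyC hornerC oppr0.
Qed.

Lemma Dv_norm p k : Dv (lnormalize k p).
Proof.
elim/poly_ind: p k => [|p c IH] k.
  have -> : lnormalize k 0 = lzero by apply: phi_inj; rewrite phi_norm phi_lzero /E tofrac0 mul0r.
  exists lzero; rewrite lbar_lzero; lring.
have -> : lnormalize k (p * 'X + c%:P) = ladd (lnormalize (k + 1) p) (lmul (lnormalize 0 c%:P) (lmono k)).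
  apply: phi_inj; rewrite phi_add phi_mul phi_lmono !phi_norm /E tofracD tofracM expfzDr ?XF_neq0 //.
  rewrite expr0z mulr1 expr1z -/XF; ring.
apply: Dv_add => //; apply: Dv_mulpal; [exact: pal_const | exact: Dv_mono].
Qed.

Lemma Dv_all f : Dv f.
Proof.
have -> : f = lnormalize (lexp f) (lpoly f) by apply: phi_inj; rewrite phi_norm.
exact: Dv_norm.
Qed.

Lemma XF_pow1 (n : nat) : XF ^+ n = 1 -> n = 0%N.
Proof.
rewrite /XF -tofracXn -tofrac1 => /eqP; rewrite tofrac_eq => /eqP.
move/(congr1 (fun p : {poly 'F_2} => size p)); rewrite size_polyXn size_poly1.
by case.
Qed.

Lemma F2_nz (c : 'F_2) : c != 0 -> c = 1.
Proof. by case: c => [[|[|m]] hm] //= _; apply: val_inj. Qed.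

Lemma unit_pal q v : palindrome q -> lmul q v = lone -> q = lone.
Proof.
move=> pq h; have h' := congr1 phi h; rewrite phi_mul phi_lone /phi /E in h'.
have qn : lpoly q != 0.
  apply/eqP => e; move: h'; rewrite e tofrac0 !mul0r => /eqP; by rewrite eq_sym oner_eq0.
have vn : lpoly v != 0.
  apply/eqP => e; move: h'; rewrite e tofrac0 !mul0r mulr0 => /eqP; by rewrite eq_sym oner_eq0.
have : size (lpoly q) = 1%N.
  apply: (unit_size (lnormal_x qn) (lnormal_x vn) (k := lexp q + lexp v)).
  by rewrite -h' expfzDr ?XF_neq0 //; ring.
move/eqP/size_poly1P => [c cn hc]; rewrite (F2_nz cn) in hc.
have e1 : phi q = XF ^ lexp q by rewrite /phi /E hc tofrac1 mul1r.
have e2 : phi (lbar q) = XF ^ (- lexp q) by rewrite phi_lbar /Ebar hc tilde1 mul1r.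
have hk : XF ^ (lexp q + lexp q) = 1.
  have e3 : XF ^ lexp q = XF ^ (- lexp q) by rewrite -e1 -e2 pq.
  by rewrite expfzDr ?XF_neq0 // {1}e3 XFNK.
have k0 : lexp q = 0.
  move: hk; case: (lexp q) => n.
    rewrite -PoszD => /XF_pow1; lia.
  move/(congr1 (fun z => z^-1)); rewrite invr_expz invr1 opprD !NegzE opprK -PoszD.
  by move/XF_pow1.
by apply: phi_inj; rewrite e1 k0 expr0z phi_lone.
Qed.
Lemma algW (R : comRingType) (X1 X2 Y1 Y2 al be U V lam : R) :
  al * X1 = U * X1 + be * X2 -> lam * Y1 = be -> lam * Y2 = al + V ->
  X1 * Y2 * lam = (U + V) * X1 + Y1 * X2 * lam.
Proof.
move=> h1 c1 c2.
transitivity (X1 * (lam * Y2)); first ring.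
rewrite c2; transitivity (al * X1 + V * X1); first ring.
rewrite h1 -c1; ring.
Qed.

Lemma alg13 (R : comRingType) (X1 X2 Y1 Y2 al be ga de A B Ab Bb U V : R) :
  (2 : R) = 0 -> U * V = 1 ->
  al * X1 = U * X1 + be * X2 -> ga * X1 = U * X2 + de * X2 ->
  al * Y1 = V * Y1 + be * Y2 -> ga * Y1 = V * Y2 + de * Y2 ->
  A * X1 = 1 + B * X2 -> Ab * Y1 = 1 + Bb * Y2 ->
  (X1 * Y2 + Y1 * X2) * (A * (Ab * be + Bb * (al + V)) + B * (Ab * (de + V) + Bb * ga)) = U + V.
Proof.
move=> two0 UV h1 h2 h1b h2b hb hbb.
have c1 : (Ab * be + Bb * (al + V)) * Y1 = be.
  transitivity ((Ab * Y1) * be + Bb * (al * Y1) + Bb * V * Y1); first ring.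
  rewrite hbb h1b; transitivity (be + 2 * (Bb * be * Y2 + Bb * V * Y1)); first ring.
  by rewrite two0 mul0r addr0.
have c2 : (Ab * be + Bb * (al + V)) * Y2 = al + V.
  transitivity (Ab * be * Y2 + Bb * Y2 * (al + V)); first ring.
  have e : Bb * Y2 = Ab * Y1 + 1 by rewrite hbb; ring: two0.
  rewrite e; transitivity ((al * Y1) * Ab + Ab * be * Y2 + Ab * Y1 * V + (al + V)); first ring.
  rewrite h1b; transitivity (al + V + 2 * (Ab * V * Y1 + Ab * be * Y2)); first ring.
  by rewrite two0 mul0r addr0.
have c3 : (Ab * (de + V) + Bb * ga) * Y1 = de + V.
  transitivity ((Ab * Y1) * (de + V) + Bb * (ga * Y1)); first ring.
  rewrite hbb h2b; transitivity (de + V + 2 * (Bb * Y2 * de + Bb * Y2 * V)); first ring.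
  by rewrite two0 mul0r addr0.
have c4 : (Ab * (de + V) + Bb * ga) * Y2 = ga.
  transitivity (Ab * Y2 * (de + V) + Bb * Y2 * ga); first ring.
  have e : Bb * Y2 = Ab * Y1 + 1 by rewrite hbb; ring: two0.
  rewrite e; transitivity (Ab * (ga * Y1) + Ab * Y2 * (de + V) + ga); first ring.
  rewrite h2b; transitivity (ga + 2 * (Ab * V * Y2 + Ab * de * Y2)); first ring.
  by rewrite two0 mul0r addr0.
move: c1 c2 c3 c4; move: (Ab * be + Bb * (al + V)) (Ab * (de + V) + Bb * ga) => lam mu c1 c2 c3 c4.
have w1 := algW h1 c1 c2.
have h2' : de * X2 = U * X2 + ga * X1.
  rewrite h2; symmetry; transitivity (de * X2 + 2 * (U * X2)); first ring.
  by rewrite two0 mul0r addr0.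
have w2 : X2 * Y1 * mu = (U + V) * X2 + Y2 * X1 * mu.
  apply: (algW h2') => //; rewrite -c3; ring.
transitivity (A * (X1 * Y2 * lam) + A * Y1 * X2 * lam + B * (X2 * Y1 * mu) + B * X1 * Y2 * mu); first ring.
rewrite w1 w2.
transitivity ((U + V) * (A * X1 + B * X2) + 2 * (A * Y1 * X2 * lam + B * Y2 * X1 * mu)); first ring.
rewrite two0 mul0r addr0 hb.
transitivity (U + V + 2 * ((U + V) * B * X2)); first ring.
by rewrite two0 mul0r addr0.
Qed.
Lemma c2z (R : comRingType) (x y : R) : (2 : R) = 0 -> x = y + 2 * 0 -> x = y.
Proof. by move=> _ ->; rewrite mulr0 addr0. Qed.

Lemma c2mv (R : comRingType) (a b c : R) : (2 : R) = 0 -> a + b = c -> b = c + a.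
Proof.
move=> two0 <-; transitivity (b + 2 * a); last ring.
by rewrite two0 mul0r addr0.
Qed.

Lemma alg32a (R : comRingType) (X1 X2 Y1 Y2 q1 q2 t : R) : (2 : R) = 0 ->
  X1 + Y1 = t * q1 -> X2 + Y2 = t * q2 -> X1 * Y2 + Y1 * X2 = t * (q2 * X1 + q1 * X2).
Proof.
move=> two0 /(c2mv two0) -> /(c2mv two0) ->.
transitivity (t * (q2 * X1 + q1 * X2) + 2 * (X1 * X2)); first ring.
by rewrite two0 mul0r addr0.
Qed.

Lemma alg32b (R : comRingType) (X1 X2 q1 q2 U : R) : (2 : R) = 0 ->
  q2 * X1 + q1 * X2 = 1 ->
  q2 * (X1 + q1 * U) + q1 * (X2 + q2 * U) = 1 /\
  (X2 + q2 * U) * X1 + (X1 + q1 * U) * X2 = U.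
Proof.
move=> two0 h; split.
  transitivity (q2 * X1 + q1 * X2 + 2 * (q1 * q2 * U)); first ring.
  by rewrite two0 mul0r addr0.
transitivity (U * (q2 * X1 + q1 * X2) + 2 * (X1 * X2)); first ring.
by rewrite two0 mul0r addr0 h mulr1.
Qed.

Lemma alg23a (R : comRingType) (X1 X2 p q r s U : R) : (2 : R) = 0 ->
  p * s + q * r = 1 -> p * X1 + q * X2 = 1 -> r * X1 + s * X2 = U ->
  X1 = s + q * U /\ X2 = r + p * U.
Proof.
move=> two0 d h1 h2; split.
  transitivity ((p * s + q * r) * X1 + 2 * (q * s * X2)); first by rewrite d mul1r two0 mul0r addr0.
  transitivity (s * (p * X1 + q * X2) + q * (r * X1 + s * X2)); first ring.
  by rewrite h1 h2 mulr1.
transitivity ((p * s + q * r) * X2 + 2 * (p * r * X1)); first by rewrite d mul1r two0 mul0r addr0.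
transitivity (r * (p * X1 + q * X2) + p * (r * X1 + s * X2)); first ring.
by rewrite h1 h2 mulr1.
Qed.

Lemma alg23b (R : comRingType) (p q r s U V : R) : (2 : R) = 0 ->
  p * s + q * r = 1 ->
  (s + q * U) * (r + p * V) + (s + q * V) * (r + p * U) = V + U.
Proof.
move=> two0 d.
transitivity ((V + U) * (p * s + q * r) + 2 * (s * r + q * p * U * V)); first ring.
by rewrite two0 mul0r addr0 d mulr1.
Qed.

Lemma alg21det (R : comRingType) (p q r s t : R) : (2 : R) = 0 ->
  p * s + q * r = 1 ->
  (s * r + q * p + t * q * r) * (r * s + p * q + t * p * s) +
  (s * s + q * q + t * q * s) * (r * r + p * p + t * p * r) = 1.
Proof.
move=> two0 d.
transitivity ((p * s + q * r) ^+ 2 + 2 * (r^+2*s^+2 + p*r*s^+2*t + p^+2*q^+2 + p^+2*q*s*t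
   + q*r^+2*s*t + p*q^+2*r*t + p*q*r*s*t^+2)); first ring.
by rewrite two0 mul0r addr0 d expr1n.
Qed.

Lemma alg21act (R : comRingType) (X1 X2 p q r s U V : R) : (2 : R) = 0 -> U * V = 1 ->
  p * s + q * r = 1 -> p * X1 + q * X2 = 1 -> r * X1 + s * X2 = U ->
  (s * r + q * p + (U + V) * q * r) * X1 + (s * s + q * q + (U + V) * q * s) * X2 = U * X1 /\
  (r * r + p * p + (U + V) * p * r) * X1 + (r * s + p * q + (U + V) * p * s) * X2 = U * X2.
Proof.
move=> two0 UV d h1 h2.
have [e1 e2] := alg23a two0 d h1 h2.
split.
  transitivity (s * (r * X1 + s * X2) + q * (p * X1 + q * X2) + q * (U + V) * (r * X1 + s * X2)); first ring.
  rewrite h1 h2 e1; transitivity (U * (s + q * U) + q * (2 * 1 + U * V - 1)); first ring.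
  by rewrite UV two0 mul0r add0r subrr mulr0 addr0.
transitivity (r * (r * X1 + s * X2) + p * (p * X1 + q * X2) + p * (U + V) * (r * X1 + s * X2)); first ring.
rewrite h1 h2 e2; transitivity (U * (r + p * U) + p * (2 * 1 + U * V - 1)); first ring.
by rewrite UV two0 mul0r add0r subrr mulr0 addr0.
Qed.

Lemma c2mv' (R : comRingType) (a b c : R) : (2 : R) = 0 -> a + b = c -> a = c + b.
Proof. by move=> two0; rewrite addrC; apply: c2mv. Qed.

Notation U := XF.
Notation V := (XF^-1).

Lemma phi_tU : phi tU = U + V.
Proof. by rewrite /tU phi_add phi_lu phi_luinv. Qed.

Lemma tU_neq0 : U + V != 0.
Proof. by rewrite -phi_tU; apply: phi_neq0; exact: t_neq0. Qed.

Lemma lbar_tU : lbar tU = tU.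
Proof. by rewrite /tU lbar_add lbar_lu lbar_luinv; lring. Qed.

Lemma Kcancel (a b : K) : (U + V) * a = (U + V) * b -> a = b.
Proof. by move=> h; apply: (mulfI tU_neq0). Qed.

Lemma Dv_pal f q : ladd f (lbar f) = lmul tU q -> palindrome q.
Proof.
move=> h; have hb := congr1 lbar h.
rewrite lbar_add lbar_invol lbar_mul lbar_tU in hb.
apply: (lcancel t_neq0); rewrite -hb -h; lring.
Qed.

Lemma pal_r x q : ladd x (lbar x) = lmul tU q -> palindrome q ->
  palindrome (ladd x (lmul q lu)).
Proof.
move=> h pq; rewrite /palindrome lbar_add lbar_mul pq lbar_lu.
have h' := congr1 phi h; rewrite phi_add phi_mul phi_tU in h'.
apply: phi_inj; rewrite !phiE' (c2mv two0 h').
transitivity (phi x + phi q * U + 2 * (phi q * V)); last by rewrite two0 mul0r addr0.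
ring.
Qed.

Lemma dir13 xi : minimal xi -> (exists a : lmx, csca a /\ mxact a xi = vscale lu xi) ->
  wedge xi (vbar xi) = ladd luinv lu.
Proof.
move=> hmin [a [[pal hdet] hact]].
have [A [B hAB]] := bezout hmin.
case: xi hmin hact hAB => x1 x2 hmin; rewrite /mxact /vscale /= => hh hAB.
have H1 := congr1 fst hh; have H2 := congr1 snd hh; simpl in H1, H2; clear hh.
move: (pal i0 i0) (pal i0 i1) (pal i1 i0) (pal i1 i1) hdet H1 H2; rewrite /ldet.
move: (a i0 i0) (a i0 i1) (a i1 i0) (a i1 i1) => al be ga de p1 p2 p3 p4 hdet H1 H2.
have H1b := congr1 lbar H1; have H2b := congr1 lbar H2; have hABb := congr1 lbar hAB.
rewrite !lbar_add !lbar_mul p1 p2 lbar_lu in H1b.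
rewrite !lbar_add !lbar_mul p3 p4 lbar_lu in H2b.
rewrite !lbar_add !lbar_mul lbar_lone in hABb.
have [q hq] := Dv_all (lmul x1 (lbar x2)).
have pq := Dv_pal hq.
rewrite lbar_mul lbar_invol in hq.
pose lam := ladd (lmul (lbar A) be) (lmul (lbar B) (ladd al luinv)).
pose mu := ladd (lmul (lbar A) (ladd de luinv)) (lmul (lbar B) ga).
pose nu := ladd (lmul A lam) (lmul B mu).
have hK : (phi x1 * phi (lbar x2) + phi (lbar x1) * phi x2) * phi nu = U + V.
  rewrite /nu /lam /mu !phiE'.
  apply: alg13 two0 UV _ _ _ _ _ _.
  - by apply: c2mv' two0 _; move: (congr1 phi H1); rewrite !phiE'.
  - by apply: c2mv' two0 _; move: (congr1 phi H2); rewrite !phiE'.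
  - by apply: c2mv' two0 _; move: (congr1 phi H1b); rewrite !phiE'.
  - by apply: c2mv' two0 _; move: (congr1 phi H2b); rewrite !phiE'.
  - by apply: c2mv' two0 _; move: (congr1 phi hAB); rewrite !phiE'.
  - by apply: c2mv' two0 _; move: (congr1 phi hABb); rewrite !phiE'.
have hq' := congr1 phi hq; rewrite !phiE' ?phi_tU in hq'.
have qnu : lmul q nu = lone.
  apply: phi_inj; rewrite phi_mul phi_lone; apply: Kcancel.
  by rewrite mulr1 mulrA -hq' hK.
have q1 := unit_pal pq qnu.
rewrite /wedge /vbar /= hq q1; lring.
Qed.

Lemma dir32 xi : wedge xi (vbar xi) = ladd luinv lu ->
  exists b : lmx, csca b /\ mxact b xi = (lone, lu).
Proof.
case: xi => x1 x2; rewrite /wedge /vbar /= => hw.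
have [q1 h1] := Dv_all x1; have [q2 h2] := Dv_all x2.
have pq1 := Dv_pal h1; have pq2 := Dv_pal h2.
have h1' := congr1 phi h1; have h2' := congr1 phi h2; have hw' := congr1 phi hw.
rewrite !phiE' ?phi_tU in h1' h2' hw'.
have hd : phi q2 * phi x1 + phi q1 * phi x2 = 1.
  apply: Kcancel; rewrite mulr1 -(alg32a two0 h1' h2') hw'; ring.
have [hdet hrow] := alg32b (phi (lu)) two0 hd.
exists (\matrix_(i < 2, j < 2) if i == i0 then (if j == i0 then q2 else q1)
        else (if j == i0 then ladd x2 (lmul q2 lu) else ladd x1 (lmul q1 lu))).
split; first split.
- move=> i j; rewrite mxE; case: (i == i0); case: (j == i0) => //.
  + exact: pal_r h2 pq2.
  + exact: pal_r h1 pq1.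
- rewrite /ldet !mxE /=; apply: phi_inj; rewrite !phiE'; rewrite phi_lu in hdet; exact: hdet.
- rewrite /mxact !mxE /=; congr pair; apply: phi_inj; rewrite !phiE' //.
  by rewrite phi_lu in hrow.
Qed.

Lemma dir23 xi : (exists b : lmx, csca b /\ mxact b xi = (lone, lu)) ->
  wedge xi (vbar xi) = ladd luinv lu.
Proof.
case: xi => x1 x2 [b [[pal hdet] hact]]; rewrite /mxact /= in hact.
have H1 := congr1 fst hact; have H2 := congr1 snd hact; simpl in H1, H2; clear hact.
move: (pal i0 i0) (pal i0 i1) (pal i1 i0) (pal i1 i1) hdet H1 H2; rewrite /ldet.
move: (b i0 i0) (b i0 i1) (b i1 i0) (b i1 i1) => p q r s pp pq pr ps hdet H1 H2.
have hd := congr1 phi hdet; have H1' := congr1 phi H1; have H2' := congr1 phi H2.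
rewrite !phiE' in hd H1' H2'.
have [e1 e2] := alg23a two0 hd H1' H2'.
have ex1 : x1 = ladd s (lmul q lu) by apply: phi_inj; rewrite !phiE'.
have ex2 : x2 = ladd r (lmul p lu) by apply: phi_inj; rewrite !phiE'.
have bx1 : lbar x1 = ladd s (lmul q luinv) by rewrite {1}ex1 lbar_add lbar_mul pq ps lbar_lu.
have bx2 : lbar x2 = ladd r (lmul p luinv) by rewrite {1}ex2 lbar_add lbar_mul pp pr lbar_lu.
rewrite /wedge /vbar /= bx1 bx2; apply: phi_inj; rewrite !phiE' e1 e2.
exact: alg23b two0 hd.
Qed.

Lemma dir21 xi : (exists b : lmx, csca b /\ mxact b xi = (lone, lu)) ->
  exists a : lmx, csca a /\ mxact a xi = vscale lu xi.
Proof.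
case: xi => x1 x2 [b [[pal hdet] hact]]; rewrite /mxact /= in hact.
have H1 := congr1 fst hact; have H2 := congr1 snd hact; simpl in H1, H2; clear hact.
move: (pal i0 i0) (pal i0 i1) (pal i1 i0) (pal i1 i1) hdet H1 H2; rewrite /ldet.
move: (b i0 i0) (b i0 i1) (b i1 i0) (b i1 i1) => p q r s pp pq pr ps hdet H1 H2.
have hd := congr1 phi hdet; have H1' := congr1 phi H1; have H2' := congr1 phi H2.
rewrite !phiE' in hd H1' H2'.
pose al := ladd (ladd (lmul s r) (lmul q p)) (lmul (lmul tU q) r).
pose be := ladd (ladd (lmul s s) (lmul q q)) (lmul (lmul tU q) s).
pose ga := ladd (ladd (lmul r r) (lmul p p)) (lmul (lmul tU p) r).
pose de := ladd (ladd (lmul r s) (lmul p q)) (lmul (lmul tU p) s).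
exists (\matrix_(i < 2, j < 2) if i == i0 then (if j == i0 then al else be)
        else (if j == i0 then ga else de)).
split; first split.
- move=> i j; rewrite mxE /palindrome.
  case: (i == i0); case: (j == i0);
    by rewrite /al /be /ga /de !lbar_add !lbar_mul lbar_tU ?pp ?pq ?pr ?ps.
- rewrite /ldet !mxE /=; apply: phi_inj; rewrite !phiE' ?phi_tU.
  exact: alg21det two0 hd.
- rewrite /mxact /vscale !mxE /=.
  have [a1 a2] := alg21act two0 UV hd H1' H2'.
  congr pair; apply: phi_inj; rewrite !phiE' ?phi_tU; [exact: a1 | exact: a2].
Qed.

Theorem mainTheorem4 (xi : lvec) :
  minimal xi ->
  ((exists a : lmx, csca a /\ mxact a xi = vscale lu xi) <->
   (exists b : lmx, csca b /\ mxact b xi = (lone, lu))) /\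
  ((exists b : lmx, csca b /\ mxact b xi = (lone, lu)) <->
   wedge xi (vbar xi) = ladd luinv lu).
Proof.
move=> hmin; split; split.
- by move=> h; apply: dir32; apply: dir13 hmin h.
- exact: dir21.
- exact: dir23.
- exact: dir32.
Qed.
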